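(* Let $\mathbb{T}=t_0t_1t_2\cdots\in\{0,1\}^\omega$ be the Thue–Morse word, where $t_n$ is the sum modulo 2 of the binary digits of $n$. Define $\varphi':\{0,1\}^+\to\{0,1,2\}$ by $\varphi'(u)=0$ if $u$ is a prefix of $\mathbb{T}$ ending with $0$, $\varphi'(u)=1$ if $u$ is a prefix of $\mathbb{T}$ ending with $1$, and $\varphi'(u)=2$ otherwise. Then $\mathbb{T}$ admits no $\varphi'$-monochromatic factorization.
   Context: A factorization $x=V_0V_1V_2\cdots$ with all $V_i$ non-empty finite words is $\varphi$-monochromatic if there is a color $c$ with $\varphi(V_i)=c$ for all $i\ge0$. *)

(* Defs.v *)
(* Words over {0,1} are encoded as bool (0 = false, 1 = true). *)
From mathcomp Require Import all_boot.
Set Implicit Arguments. Unset Strict Implicit. Unset Printing Implicit Defensive.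

(* Sum of binary digits of n; the fuel argument (initialised to n) is always
   sufficient since n %/ 2 < n for n > 0. *)
Fixpoint bin_digit_sum_aux (fuel n : nat) : nat :=
  match fuel with
  | 0 => 0
  | k.+1 => (n %% 2) + bin_digit_sum_aux k (n %/ 2)
  end.
Definition bin_digit_sum (n : nat) : nat := bin_digit_sum_aux n n.

Definition thue_morse (n : nat) : bool := odd (bin_digit_sum n).

Definition inf_prefix (x : nat -> bool) (n : nat) : seq bool := mkseq x n.

Definition is_prefix_of (u : seq bool) (x : nat -> bool) : bool :=
  u == inf_prefix x (size u).

Definition phi' (u : seq bool) : nat :=
  if (size u > 0) && is_prefix_of u thue_morse then
    (if last false u then 1 else 0)
  else 2.

Definition is_factorization (x : nat -> bool) (V : nat -> seq bool) : Prop :=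
  (forall i, 0 < size (V i)) /\
  (forall n, let w := flatten [seq V i | i <- iota 0 n] in
             w = inf_prefix x (size w)).

Definition monochromatic (phi : seq bool -> nat) (V : nat -> seq bool) : Prop :=
  exists c, forall i, phi (V i) = c.

(* Main.v *)
Require Import Defs.
From mathcomp Require Import all_boot.
From mathcomp Require Import zify.

Lemma aux0 f : bin_digit_sum_aux f 0 = 0.
Proof. by elim: f => //= f ->. Qed.

Lemma aux_stable f g n : n <= f -> n <= g ->
  bin_digit_sum_aux f n = bin_digit_sum_aux g n.
Proof.
elim: f g n => [|f IH] [|g] n /= Hf Hg.
- by [].
- have -> : n = 0 by lia. by rewrite aux0.
- have -> : n = 0 by lia. by rewrite aux0.
- by rewrite (IH g) //; lia.
Qed.

Lemma tm_even k : thue_morse (2 * k) = thue_morse k.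
Proof.
rewrite /thue_morse /bin_digit_sum.
case: k => [|k] //.
have -> : 2 * k.+1 = (2 * k.+1).-1.+1 by lia.
rewrite /=.
have -> : (2 * k.+1).-1.+1 %% 2 = 0 by lia.
have -> : (2 * k.+1).-1.+1 %/ 2 = k.+1 by lia.
by rewrite add0n (aux_stable _ k.+1) //; lia.
Qed.

Lemma tm_odd k : thue_morse (2 * k).+1 = ~~ thue_morse k.
Proof.
rewrite /thue_morse /bin_digit_sum /=.
have -> : (2 * k).+1 %% 2 = 1 by lia.
have -> : (2 * k).+1 %/ 2 = k by lia.
by rewrite (aux_stable _ k) //; lia.
Qed.

Lemma tm_adj m : ~~ odd m -> thue_morse m.+1 = ~~ thue_morse m.
Proof.
move=> Hm.
have -> : m = 2 * m./2 by move: (odd_double_half m); rewrite (negbTE Hm) -muln2; lia.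
by rewrite tm_odd tm_even.
Qed.

Definition P (c : bool) (s : nat -> nat) : Prop :=
  s 0 = 0 /\ (forall i, s i < s i.+1) /\
  (forall i j, j < s i.+1 - s i -> thue_morse (s i + j) = thue_morse j) /\
  (forall i, thue_morse (s i.+1 - s i).-1 = c).

Lemma P_even {c s} : P c s -> forall i, ~~ odd (s i).
Proof.
case=> [H0 [Hlt [Hb Hl]]].
case: c Hl => Hl.
-
  have d2 : forall i, 2 <= s i.+1 - s i.
    move=> i; have := Hlt i; move: (Hl i).
    case E: (s i.+1 - s i) => [|[|d]] //; lia.
  have dodd : forall i, odd (s i) -> s i.+1 = s i + 2.
    move=> i Ho.
    case: (ltnP 2 (s i.+1 - s i)) => Hd; last by have := d2 i; lia.
    have h1 := Hb i 1 ltac:(lia). have h2 := Hb i 2 ltac:(lia).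
    have := tm_adj (s i + 1) ltac:(rewrite oddD Ho //).
    by rewrite -addnS h1 h2.
  move=> i; apply/negP => Ho.
  have E1 := dodd i Ho.
  have Ho1 : odd (s i.+1) by rewrite E1 oddD Ho.
  have E2 := dodd _ Ho1.
  have Ho2 : odd (s i.+2) by rewrite E2 oddD Ho1.
  have a1 := Hb i 1 ltac:(have := d2 i; lia).
  have a2 := Hb i.+1 1 ltac:(have := d2 i.+1; lia).
  have a3 := Hb i.+2 1 ltac:(have := d2 i.+2; lia).
  have t1 : thue_morse 1 = true by [].
  set m := (s i + 1)./2.
  have Em : s i + 1 = 2 * m.
    rewrite /m; move: (odd_double_half (s i + 1)); rewrite oddD Ho /= -muln2; lia.
  have b1 : thue_morse m = true by rewrite -tm_even -Em a1.
  have b2 : thue_morse m.+1 = true.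
    by rewrite -tm_even -t1 -a2; congr thue_morse; lia.
  have b3 : thue_morse m.+2 = true.
    by rewrite -tm_even -t1 -a3; congr thue_morse; lia.
  case Hm: (odd m).
  + have := tm_adj (m.+1) ltac:(by rewrite /= Hm). by rewrite b2 b3.
  + have := tm_adj (m) ltac:(by rewrite Hm). by rewrite b1 b2.
-
  case=> [|n]; first by rewrite H0.
  apply/negP => Ho.
  have hq : thue_morse (s n.+1).-1 = false.
    have := Hb n (s n.+1 - s n).-1 ltac:(have := Hlt n; lia).
    rewrite Hl => <-; congr thue_morse; have := Hlt n; lia.
  have hp : thue_morse (s n.+1) = false.
    have := Hb n.+1 0 ltac:(have := Hlt n.+1; lia). by rewrite addn0.
  have Hev : ~~ odd (s n.+1).-1.
    by move: Ho; case: (s n.+1) => [|q] //=.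
  have := tm_adj _ Hev.
  have -> : (s n.+1).-1.+1 = s n.+1 by have := Hlt n; lia.
  by rewrite hp hq.
Qed.

Lemma P_half {c s h} : P c s -> (forall i, s i = 2 * h i) -> P (~~ c) h.
Proof.
case=> [H0 [Hlt [Hb Hl]]] Hs.
split; first by have := H0; rewrite Hs; lia.
split; first by move=> i; have := Hlt i; rewrite !Hs; lia.
split.
- move=> i j Hj.
  have := Hb i (2 * j) ltac:(rewrite !Hs; lia).
  rewrite tm_even Hs -mulnDr tm_even. done.
- move=> i. have := Hl i. rewrite !Hs.
  have -> : (2 * h i.+1 - 2 * h i).-1 = (2 * (h i.+1 - h i).-1).+1
    by have := Hlt i; rewrite !Hs; lia.
  by rewrite tm_odd => <-; rewrite negbK.
Qed.

Lemma no_P n : forall c s, s 1 <= n -> ~ P c s.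
Proof.
elim: n => [|n IH] c s Hn HP.
- case: HP => [H0 [Hlt _]]. have := Hlt 0. lia.
- have Hev := P_even HP.
  have Hs : forall i, s i = 2 * (s i)./2.
    move=> i; move: (odd_double_half (s i)); rewrite (negbTE (Hev i)) -muln2; lia.
  have HP' := P_half HP Hs.
  apply: (IH _ _ _ HP').
  have := Hs 1. case: HP => [H0 [Hlt _]]. have := Hlt 0. lia.
Qed.

Theorem mainTheorem11 :
  ~ (exists V : nat -> seq bool,
        is_factorization thue_morse V /\ monochromatic phi' V).
Proof.
case=> V [[Hsz Hpre] [cc Hc]].
pose F i := flatten [seq V k | k <- iota 0 i].
have FS : forall i, F i.+1 = F i ++ V i.
  move=> i; rewrite /F -addn1 iotaD map_cat flatten_cat /= cats0 //.
have HF : forall i, F i = inf_prefix thue_morse (size (F i)) := Hpre.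
have Vnth : forall i j, j < size (V i) ->
    nth false (V i) j = thue_morse (size (F i) + j).
  move=> i j Hj.
  have := congr1 (fun w => nth false w (size (F i) + j)) (HF i.+1).
  rewrite /= FS nth_cat ltnNge leq_addr /= addKn => ->.
  rewrite /inf_prefix nth_mkseq // size_cat; lia.
have HV0 : V 0 = inf_prefix thue_morse (size (V 0)).
  by have := HF 1; rewrite FS /F /=.
have Hpref : forall i, (0 < size (V i)) && is_prefix_of (V i) thue_morse.
  move=> i; rewrite Hsz /=.
  have : phi' (V i) != 2.
    rewrite Hc -(Hc 0) /phi' Hsz /is_prefix_of -HV0 eqxx /=.
    by case: (last _ _).
  by rewrite /phi' Hsz /=; case: (is_prefix_of _ _).
have Vp : forall i j, j < size (V i) -> nth false (V i) j = thue_morse j.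
  move=> i j Hj. have := Hpref i => /andP [_ /eqP ->].
  by rewrite /inf_prefix nth_mkseq.
have Hlast : forall i, last false (V i) = last false (V 0).
  move=> i. have := Hc i. rewrite -(Hc 0) /phi' !Hpref.
  by case: (last _ _); case: (last _ _).
apply: (@no_P (size (F 1)) (last false (V 0)) (fun i => size (F i))) => //.
split; first by [].
split; first by move=> i; rewrite FS size_cat; have := Hsz i; lia.
split.
- move=> i j; rewrite FS size_cat addKn => Hj.
  by rewrite -Vnth // Vp.
- move=> i; rewrite FS size_cat addKn -(Hlast i) -nth_last Vp //.
  have := Hsz i; lia.
Qed.
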